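(* Let $A\in\mathbb{C}^{p\times p}$ and $C\in\mathbb{C}^{q\times q}$ be Hermitian positive semidefinite, $B\in\mathbb{C}^{p\times q}$, and $H=\begin{bmatrix} A & B\\ B^* & -C\end{bmatrix}$. Decompose $\mathbb{C}^p=\mathcal{R}(A)\oplus\mathcal{N}(A)$ and $\mathbb{C}^q=\mathcal{R}(C)\oplus\mathcal{N}(C)$ (orthogonal decompositions into range and null-space). Let $A_1$ be the restriction of $A$ to $\mathcal{R}(A)$ and $C_1$ the restriction of $C$ to $\mathcal{R}(C)$ (these are positive definite), and write $B$ in block form with respect to these decompositions, \[ B=\begin{bmatrix} B_{11} & B_{12}\\ B_{21} & B_{22}\end{bmatrix}, \] where $B_{11}:\mathcal{R}(C)\to\mathcal{R}(A)$, $B_{12}:\mathcal{N}(C)\to\mathcal{R}(A)$, $B_{21}:\mathcal{R}(C)\to\mathcal{N}(A)$, $B_{22}:\mathcal{N}(C)\to\mathcal{N}(A)$ are the corresponding compressions of $B$. Assume that $\dim\mathcal{N}(A)=\dim\mathcal{N}(C)$ and that $B_{22}$ is nonsingular. Then $(-\epsilon,\epsilon)\cap\sigma(H)=\emptyset$, where \[ \epsilon=\frac{1}{\bigl(1+\max\{\|B_{12}B_{22}^{-1}\|,\ \|B_{21}^*B_{22}^{-*}\|\}\bigr)^2\ \max\{\|A_1^{-1}\|,\ \|C_1^{-1}\|,\ \|B_{22}^{-1}\|\}}. \]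
   Context: $\mathcal{R}$ and $\mathcal{N}$ denote range and null-space, $\sigma$ the spectrum, $\|\cdot\|$ the spectral norm, and $B_{22}^{-*}=(B_{22}^{-1})^*$. *)

(* Defs.v *)
From HB Require Import structures.
From mathcomp Require Import all_boot all_order all_algebra.
From mathcomp Require Import boolp classical_sets reals.
From mathcomp Require Import complex.
Set Implicit Arguments. Unset Strict Implicit. Unset Printing Implicit Defensive.
Import Order.TTheory GRing.Theory Num.Theory.
Local Open Scope ring_scope.

Definition ctrmx (R : rcfType) (m n : nat) (M : 'M[R[i]]_(m, n)) : 'M[R[i]]_(n, m) :=
  (map_mx (fun z : R[i] => z^*) M)^T.

(* Hermitian positive semidefinite: M^* = M and x^* M x >= 0 for all x
   (the order on R[i] means "real and nonnegative"). *)
Definition hpsd (R : rcfType) (n : nat) (M : 'M[R[i]]_n) : Prop :=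
  ctrmx M = M /\ forall x : 'cV[R[i]]_n, 0 <= (ctrmx x *m M *m x) ord0 ord0.

Definition vnorm (R : rcfType) (n : nat) (x : 'cV[R[i]]_n) : R :=
  Num.sqrt (\sum_(k < n) (ComplexField.Normc.normc (x k ord0)) ^+ 2).

(* Spectral (operator 2-)norm: sup of ||M x|| over unit vectors x
   (equal to 0 for matrices with no columns, sup of the empty set). *)
Definition specnorm (R : realType) (m n : nat) (M : 'M[R[i]]_(m, n)) : R :=
  sup [set vnorm (M *m x) | x in [set x : 'cV[R[i]]_n | vnorm x = 1]].

(* Main.v *)
Require Import Defs.
From HB Require Import structures.
From mathcomp Require Import all_boot all_order all_algebra.
From mathcomp Require Import boolp classical_sets reals.
From mathcomp Require Import complex.
From mathcomp Require Import ring lra.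
Set Implicit Arguments. Unset Strict Implicit. Unset Printing Implicit Defensive.
Import Order.TTheory GRing.Theory Num.Theory.
Local Open Scope ring_scope.
Section S.
Variable R : realType.
Local Notation C := (R[i]).
Local Notation normc := (@ComplexField.Normc.normc R).

Definition dot (n : nat) (x y : 'cV[C]_n) : C := \sum_k (x k ord0)^* * y k ord0.

Lemma dotE n (x y : 'cV[C]_n) : (ctrmx x *m y) ord0 ord0 = dot x y.
Proof. by rewrite mxE; apply: eq_bigr => k _; rewrite !mxE. Qed.

Lemma normcC (z : C) : `|z| = ((normc z)%:C)%C.
Proof. by []. Qed.

Lemma normc_ge0 (z : C) : 0 <= normc z.
Proof. by case: z => a b; apply: sqrtr_ge0. Qed.

Lemma vnorm_ge0 n (x : 'cV[C]_n) : 0 <= vnorm x.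
Proof. by rewrite /vnorm sqrtr_ge0. Qed.

Lemma vnorm_sqr n (x : 'cV[C]_n) : vnorm x ^+ 2 = \sum_k normc (x k ord0) ^+ 2.
Proof. by rewrite sqr_sqrtr // sumr_ge0 // => k _; rewrite sqr_ge0. Qed.

Lemma vnormC n (x : 'cV[C]_n) : ((vnorm x ^+ 2)%:C)%C = dot x x.
Proof.
rewrite vnorm_sqr rmorph_sum; apply: eq_bigr => k _.
by rewrite rmorphXn /= -normcC normCK mulrC.
Qed.

Lemma ctrmx_mul m n p (M : 'M[C]_(m, n)) (N : 'M[C]_(n, p)) :
  ctrmx (M *m N) = ctrmx N *m ctrmx M.
Proof. by rewrite /ctrmx map_mxM trmx_mul. Qed.

Lemma ctrmxK m n (M : 'M[C]_(m, n)) : ctrmx (ctrmx M) = M.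
Proof. by apply/matrixP => i j; rewrite !mxE conjCK. Qed.

Lemma ctrmxD m n (M N : 'M[C]_(m, n)) : ctrmx (M + N) = ctrmx M + ctrmx N.
Proof. by apply/matrixP => i j; rewrite !mxE rmorphD. Qed.

Lemma ctrmxN m n (M : 'M[C]_(m, n)) : ctrmx (- M) = - ctrmx M.
Proof. by apply/matrixP => i j; rewrite !mxE rmorphN. Qed.

Lemma ctrmxZ m n a (M : 'M[C]_(m, n)) : ctrmx (a *: M) = a^* *: ctrmx M.
Proof. by apply/matrixP => i j; rewrite !mxE rmorphM. Qed.

Lemma ctrmx_inv n (M : 'M[C]_n) : ctrmx (invmx M) = invmx (ctrmx M).
Proof. by rewrite /ctrmx map_invmx trmx_inv. Qed.

Lemma ctrmx1 n : ctrmx (1%:M : 'M[C]_n) = 1%:M.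
Proof. by apply/matrixP => i j; rewrite !mxE eq_sym; case: (i == j); rewrite ?conjC0 ?conjC1. Qed.

Lemma ctrmx0 m n : ctrmx (0 : 'M[C]_(m, n)) = 0.
Proof. by apply/matrixP => i j; rewrite !mxE conjC0. Qed.

Lemma dotDl n (x y z : 'cV[C]_n) : dot (x + y) z = dot x z + dot y z.
Proof. by rewrite /dot -big_split; apply: eq_bigr => k _; rewrite !mxE rmorphD mulrDl. Qed.

Lemma dotDr n (x y z : 'cV[C]_n) : dot x (y + z) = dot x y + dot x z.
Proof. by rewrite /dot -big_split; apply: eq_bigr => k _; rewrite !mxE mulrDr. Qed.

Lemma dotZl n a (x y : 'cV[C]_n) : dot (a *: x) y = a^* * dot x y.
Proof. by rewrite /dot big_distrr; apply: eq_bigr => k _; rewrite !mxE rmorphM -mulrA. Qed.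

Lemma dotZr n a (x y : 'cV[C]_n) : dot x (a *: y) = a * dot x y.
Proof. by rewrite /dot big_distrr; apply: eq_bigr => k _; rewrite !mxE mulrCA. Qed.

Lemma dotNl n (x y : 'cV[C]_n) : dot (- x) y = - dot x y.
Proof. by rewrite /dot -sumrN; apply: eq_bigr => k _; rewrite !mxE rmorphN mulNr. Qed.

Lemma dotNr n (x y : 'cV[C]_n) : dot x (- y) = - dot x y.
Proof. by rewrite /dot -sumrN; apply: eq_bigr => k _; rewrite !mxE mulrN. Qed.

Lemma dotC n (x y : 'cV[C]_n) : dot y x = (dot x y)^*.
Proof. rewrite /dot rmorph_sum; apply: eq_bigr => k _; by rewrite rmorphM /= conjCK mulrC. Qed.

Lemma dot_mulr m n (M : 'M[C]_(m, n)) (x : 'cV[C]_m) (y : 'cV[C]_n) :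
  dot x (M *m y) = dot (ctrmx M *m x) y.
Proof. by rewrite -!dotE ctrmx_mul ctrmxK mulmxA. Qed.

Lemma dot0l n (y : 'cV[C]_n) : dot 0 y = 0.
Proof. by rewrite /dot big1 // => k _; rewrite mxE conjC0 mul0r. Qed.

Lemma dotxx_ge0 n (x : 'cV[C]_n) : 0 <= dot x x.
Proof. by rewrite -vnormC lecR sqr_ge0. Qed.

Lemma dotxx_eq0 n (x : 'cV[C]_n) : dot x x = 0 -> x = 0.
Proof.
rewrite /dot => /eqP; rewrite psumr_eq0 => [/allP H|k _]; last first.
  by rewrite mulrC -normCK exprn_ge0.
apply/matrixP => k j; rewrite (ord1 j) mxE; apply/eqP.
by have := H k (mem_index_enum _); rewrite mulrC -normCK expf_eq0 /= normr_eq0.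
Qed.

Lemma conj_ge0 (z : C) : 0 <= z -> z^* = z.
Proof. by move=> z0; rewrite conj_Creal // ger0_real. Qed.

Lemma psd_cs n (M : 'M[C]_n) : ctrmx M = M -> (forall x, 0 <= dot x (M *m x)) ->
  forall x y, `|dot x (M *m y)| ^+ 2 <= dot x (M *m x) * dot y (M *m y).
Proof.
move=> hM psd x y.
set p := dot x (M *m x); set q := dot y (M *m y); set z := dot x (M *m y).
have hp : 0 <= p by apply: psd.
have hq : 0 <= q by apply: psd.
have zc : dot y (M *m x) = z^*.
  by rewrite dot_mulr hM dotC /z.
have key : forall t, 0 <= p + t * z + t^* * z^* + t^* * t * q.
  move=> t; have := psd (x + t *: y).
  rewrite mulmxDr -scalemxAr !dotDl !dotDr !dotZl !dotZr zc -/p -/q -/z.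
  by rewrite !addrA mulrA.
rewrite normCK.
move: hq; rewrite le0r => /orP[/eqP q0|q0].
  have [z0|z0] := eqVneq z 0.
    by rewrite z0 mul0r q0 mulr0.
  have nz : 0 < z * z^* by rewrite -normCK exprn_gt0 // normr_gt0.
  pose c := (p + 1) / (z * z^*).
  have cc : c^* = c.
    apply: conj_ge0; apply: divr_ge0; [apply: addr_ge0 => //; exact: ler01 | exact: ltW].
  have := key (- c * z^*).
  rewrite q0 mulr0 addr0 rmorphM rmorphN /= conjCK cc.
  have -> : p + - c * z^* * z + - c * z * z^* = p - 2 * (c * (z * z^*)).
    by ring.
  rewrite /c -mulrA mulVf ?mulr1; last by rewrite gt_eqF.
  have -> : p - 2 * (p + 1) = - (p + 2) by ring.
  rewrite oppr_ge0 => h.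
  have : 0 < p + 2 by rewrite ltr_wpDl.
  by move=> /lt_le_trans /(_ h); rewrite ltxx.
have := key (- z^* / q).
have qc : q^* = q by apply: conj_ge0; rewrite ltW.
rewrite rmorphM rmorphN /= conjCK rmorphV /= ?qc; last by rewrite unitfE gt_eqF.
have -> : p + - z^* / q * z + - z / q * z^* + - z / q * (- z^* / q) * q
          = p - z * z^* / q.
  by field; rewrite gt_eqF.
by rewrite subr_ge0 ler_pdivrMr // mulrC.
Qed.

Lemma sqrC (r : R) : ((r ^+ 2)%:C)%C = (r%:C)%C ^+ 2.
Proof. by rewrite rmorphXn. Qed.

Lemma dot_cs n (x y : 'cV[C]_n) : normc (dot x y) <= vnorm x * vnorm y.
Proof.
have h := @psd_cs n 1%:M (ctrmx1 n) (fun x => ltac:(by rewrite mul1mx dotxx_ge0)) x y.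
rewrite !mul1mx -!vnormC normcC -!rmorphXn -rmorphM /= lecR in h.
rewrite -(ler_pXn2r (_ : 0 < 2)%N) ?nnegrE ?mulr_ge0 ?vnorm_ge0 ?normc_ge0 //.
by rewrite exprMn.
Qed.

Lemma real_le_normC (u : C) : u^* = u -> u <= `|u|.
Proof. by move=> h; apply: real_ler_norm; rewrite CrealE h. Qed.

Lemma vnormD n (x y : 'cV[C]_n) : vnorm (x + y) <= vnorm x + vnorm y.
Proof.
rewrite -(ler_pXn2r (_ : 0 < 2)%N) ?nnegrE ?addr_ge0 ?vnorm_ge0 //.
rewrite -lecR vnormC !dotDl !dotDr (dotC x y) sqrrD !rmorphD /= !vnormC.
set w := dot x y; set k := ((vnorm x * vnorm y)%:C)%C.
have hw : `|w| <= k by rewrite normcC lecR dot_cs.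
have h : w + w^* <= `|w + w^*|.
  by apply: real_le_normC; rewrite rmorphD /= conjCK addrC.
have h2 : w + w^* <= k + k.
  apply: (le_trans h); apply: (le_trans (ler_normD _ _)).
  by rewrite norm_conjC lerD.
have -> : dot x x + w + (w^* + dot y y) = dot x x + (w + w^*) + dot y y by ring.
by rewrite lerD2r lerD2l.
Qed.

Lemma vnorm_sqr_inj (a b : R) : 0 <= a -> 0 <= b -> a ^+ 2 = b ^+ 2 -> a = b.
Proof. by move=> ha hb /eqP; rewrite eqrXn2 // => /eqP. Qed.

Lemma vnormZ n a (x : 'cV[C]_n) : vnorm (a *: x) = normc a * vnorm x.
Proof.
apply: vnorm_sqr_inj; rewrite ?mulr_ge0 ?vnorm_ge0 ?normc_ge0 //.
apply: complexI; rewrite vnormC dotZl dotZr exprMn rmorphM /= vnormC.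
by rewrite rmorphXn /= -normcC normCKC mulrA.
Qed.

Lemma vnorm_eq0 n (x : 'cV[C]_n) : vnorm x = 0 -> x = 0.
Proof. by move=> h; apply: dotxx_eq0; rewrite -vnormC h expr0n /= rmorph0. Qed.

Lemma vnorm0 n : vnorm (0 : 'cV[C]_n) = 0.
Proof.
apply: vnorm_sqr_inj; rewrite ?vnorm_ge0 //; apply: complexI.
by rewrite vnormC dot0l expr0n /= rmorph0.
Qed.

Lemma vnormN n (x : 'cV[C]_n) : vnorm (- x) = vnorm x.
Proof.
apply: vnorm_sqr_inj; rewrite ?vnorm_ge0 //; apply: complexI.
by rewrite !vnormC dotNl dotNr opprK.
Qed.

Lemma vnormB n (x y : 'cV[C]_n) : vnorm (x - y) <= vnorm x + vnorm y.
Proof. by rewrite -(vnormN y) vnormD. Qed.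

Lemma normc_real (r : R) : normc ((r%:C)%C) = `|r|.
Proof. by rewrite /= expr0n /= addr0 sqrtr_sqr. Qed.

Lemma mulmx_entry m n (M : 'M[C]_(m, n)) (x : 'cV[C]_n) i :
  (M *m x) i ord0 = dot (ctrmx (row i M)) x.
Proof. by rewrite mxE /dot; apply: eq_bigr => k _; rewrite !mxE conjCK. Qed.

Lemma specnorm_ub (m n : nat) (M : 'M[C]_(m, n)) :
  has_ubound [set vnorm (M *m x) | x in [set x : 'cV[C]_n | vnorm x = 1]].
Proof.
exists (\sum_i vnorm (ctrmx (row i M)) ^+ 2 + 1) => _ [x /= hx <-].
have h2 : vnorm (M *m x) ^+ 2 <= \sum_i vnorm (ctrmx (row i M)) ^+ 2.
  rewrite vnorm_sqr; apply: ler_sum => i _.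
  rewrite mulmx_entry.
  have h := dot_cs (ctrmx (row i M)) x; rewrite hx mulr1 in h.
  by rewrite ler_pXn2r ?nnegrE ?normc_ge0 ?vnorm_ge0.
have h3 : vnorm (M *m x) <= vnorm (M *m x) ^+ 2 + 1.
  by set t := vnorm _; nra.
by apply: (le_trans h3); rewrite lerD2r.
Qed.

Lemma specnorm_ge0 (m n : nat) (M : 'M[C]_(m, n)) : 0 <= specnorm M.
Proof.
rewrite /specnorm; set E := (X in sup X).
have [[y Ey]|nE] := pselect (exists y, E y).
  apply: le_trans (ub_le_sup (specnorm_ub M) Ey).
  by case: Ey => x _ <-; apply: vnorm_ge0.
have -> : E = set0.
  by apply/seteqP; split => // y Ey; apply: nE; exists y.
by rewrite sup0.
Qed.

Lemma specnormP (m n : nat) (M : 'M[C]_(m, n)) (x : 'cV[C]_n) :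
  vnorm (M *m x) <= specnorm M * vnorm x.
Proof.
have [x0|xn0] := eqVneq (vnorm x) 0.
  by rewrite x0 (vnorm_eq0 x0) mulmx0 vnorm0 mulr0.
have xp : 0 < vnorm x by rewrite lt_neqAle eq_sym xn0 vnorm_ge0.
pose u := (((vnorm x)^-1)%:C)%C *: x.
have hu : vnorm u = 1.
  by rewrite /u vnormZ normc_real gtr0_norm ?invr_gt0 // mulVf.
have := ub_le_sup (specnorm_ub M) (ex_intro2 _ _ u hu erefl).
rewrite /u -scalemxAr vnormZ normc_real gtr0_norm ?invr_gt0 //.
by rewrite mulrC ler_pdivrMr.

Qed.

Lemma specnormP_adj (m n : nat) (M : 'M[C]_(m, n)) (x : 'cV[C]_m) :
  vnorm (ctrmx M *m x) <= specnorm M * vnorm x.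
Proof.
set y := ctrmx M *m x.
have e : vnorm y ^+ 2 = normc (dot x (M *m y)).
  by rewrite dot_mulr -vnormC normc_real ger0_norm // sqr_ge0.
have h : vnorm y ^+ 2 <= specnorm M * vnorm x * vnorm y.
  rewrite e; apply: (le_trans (dot_cs _ _)).
  rewrite [specnorm M * _]mulrC -mulrA.
  by apply: ler_wpM2l; [exact: vnorm_ge0 | exact: specnormP].
have [y0|yn0] := eqVneq (vnorm y) 0.
  by rewrite y0; apply: mulr_ge0; [exact: specnorm_ge0 | exact: vnorm_ge0].
have yp : 0 < vnorm y by rewrite lt_neqAle eq_sym yn0 vnorm_ge0.
by rewrite expr2 ler_pM2r in h.
Qed.

Lemma ge0_normc (z : C) : 0 <= z -> ((normc z)%:C)%C = z.
Proof. by move=> hz; rewrite -normcC ger0_norm. Qed.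

Lemma normc_conj (z : C) : normc (z^*) = normc z.
Proof. by apply: complexI; rewrite -!normcC norm_conjC. Qed.

Lemma coerc r (A1 : 'M[C]_r) : ctrmx A1 = A1 -> (forall x, 0 <= dot x (A1 *m x)) ->
  A1 \in unitmx -> forall a,
  vnorm a ^+ 2 <= specnorm (invmx A1) * normc (dot a (A1 *m a)).
Proof.
move=> hH psd hU a.
set y := invmx A1 *m a.
have hy : A1 *m y = a by rewrite /y mulKVmx.
have h := psd_cs hH psd a y.
rewrite hy -vnormC ger0_norm ?ler0c ?sqr_ge0 // -rmorphXn in h.
have q0 : 0 <= dot y a by have := psd y; rewrite hy.
rewrite -(ge0_normc (psd a)) -(ge0_normc q0) -rmorphM /= lecR in h.
have h2 : normc (dot y a) <= specnorm (invmx A1) * vnorm a ^+ 2.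
  rewrite dotC normc_conj.
  apply: (le_trans (dot_cs _ _)); rewrite /y expr2 mulrA.
  by rewrite mulrC; exact: (ler_wpM2r (vnorm_ge0 a) (specnormP (invmx A1) a)).
set P := normc _ in h *; set Q := normc _ in h h2; set s := specnorm _ in h2 *.
have hP : 0 <= P by apply: normc_ge0.
have hv := vnorm_ge0 a; set v := vnorm a in h h2 hv *.
have [v0|vp] := eqVneq (v ^+ 2) 0.
  by rewrite v0; apply: mulr_ge0 => //; apply: specnorm_ge0.
have vp2 : 0 < v ^+ 2 by rewrite lt_neqAle eq_sym vp sqr_ge0.
have : (v ^+ 2) ^+ 2 <= (s * P) * v ^+ 2.
  have hs := specnorm_ge0 (invmx A1); rewrite -/s in hs; nra.
by rewrite expr2 ler_pM2r.
Qed.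

Lemma conj_real (r : R) : ((r%:C)%C)^* = (r%:C)%C.
Proof. by apply: conj_Creal; rewrite complex_real. Qed.

Lemma k1_ineq n1 n2 (A1 : 'M[C]_n1) (C1 : 'M[C]_n2) (T : 'M[C]_(n1, n2))
    (a f : 'cV[C]_n1) (c g : 'cV[C]_n2) (lam : R) :
  (forall y, 0 <= dot y (A1 *m y)) -> (forall y, 0 <= dot y (C1 *m y)) ->
  A1 *m a + T *m c = (lam%:C)%C *: f -> ctrmx T *m a - C1 *m c = (lam%:C)%C *: g ->
  normc (dot a (A1 *m a)) + normc (dot c (C1 *m c)) <=
    `|lam| * (vnorm a * vnorm f + vnorm c * vnorm g).
Proof.
move=> hA hC e1 e2.
set P := dot a (A1 *m a); set Q := dot c (C1 *m c); set z := dot a (T *m c).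
set l := (lam%:C)%C.
have h1 : P + z = l * dot a f by rewrite /P /z -dotDr e1 dotZr.
have h2 : z^* - Q = l * dot c g.
  have e : dot (T *m c) a = dot c (ctrmx T *m a) by rewrite dot_mulr ctrmxK.
  by rewrite /Q /z -dotC e -dotNr -dotDr e2 dotZr.
set u := dot a f - dot c g.
have h3 : P + Q + (z - z^*) = l * u.
  have -> : P + Q + (z - z^*) = (P + z) - (z^* - Q) by ring.
  by rewrite h1 h2 /u mulrBr.
have hP : P^* = P by apply: conj_ge0; apply: hA.
have hQ : Q^* = Q by apply: conj_ge0; apply: hC.
have h4 : P + Q + (z^* - z) = l * u^*.
  have := congr1 Num.conj h3.
  rewrite !rmorphD rmorphN rmorphM /= conj_real conjCK hP hQ.
  by move=> ->; rewrite /u rmorphD; reflexivity.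
have h5 : 2 * (P + Q) = l * (u + u^*).
  have -> : 2 * (P + Q) = (P + Q + (z - z^*)) + (P + Q + (z^* - z)).
    by rewrite addrACA -opprB addNr addr0 -mulr2n mulr_natl.
  by rewrite h3 h4 -mulrDr.
have hPQ : 0 <= P + Q by apply: addr_ge0; [apply: hA | apply: hC].
have h6 : 2 * (P + Q) <= `|l| * (2 * `|u|).
  rewrite -[X in X <= _]ger0_norm ?mulr_ge0 ?ler0n // h5 normrM.
  apply: ler_wpM2l => //; apply: (le_trans (ler_normD _ _)).
  by rewrite norm_conjC mulr2n mulrDl mul1r.
rewrite -lecR rmorphD rmorphM /= -!normcC (ger0_norm (hA a)) (ger0_norm (hC c)).
have h7 : `|u| <= ((vnorm a * vnorm f + vnorm c * vnorm g)%:C)%C.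
  apply: (le_trans (ler_normB _ _)); rewrite rmorphD /=.
  by apply: lerD; rewrite normcC lecR dot_cs.
have hl : `|l| = ((`|lam|)%:C)%C.
  by rewrite normcC normc_real.
rewrite -hl; apply: (le_trans _ (ler_wpM2l (normr_ge0 _) h7)).
have h8 : 2 * (P + Q) <= 2 * (`|l| * `|u|) by rewrite mulrCA.
by rewrite ler_pM2l ?ltr0n in h8.
Qed.

Lemma range_facts p r m (A : 'M[C]_p) (U1 : 'M[C]_(p, r)) (U2 : 'M[C]_(p, m)) :
  hpsd A -> ctrmx U1 *m U1 = 1%:M -> ctrmx U1 *m U2 = 0 -> (U1^T == A^T)%MS ->
  [/\ A *m U2 = 0, ctrmx U2 *m A = 0, (ctrmx U1 *m A *m U1) \in unitmx,
      ctrmx (ctrmx U1 *m A *m U1) = ctrmx U1 *m A *m U1 &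
      forall y, 0 <= dot y ((ctrmx U1 *m A *m U1) *m y)].
Proof.
case=> hH hpos hUU hU12 /andP[s1 s2].
have [D hD] := submxP s1.
have [E hE] := submxP s2.
have hA' : A = U1 *m E^T by rewrite -[A]trmxK hE trmx_mul trmxK.
have hU' : U1 = A *m D^T by rewrite -[U1]trmxK hD trmx_mul trmxK.
have hA2 : A = ctrmx E^T *m ctrmx U1 by rewrite -hH {1}hA' ctrmx_mul.
have AU2 : A *m U2 = 0 by rewrite hA2 -mulmxA hU12 mulmx0.
split => //.
- by rewrite -hH -ctrmx_mul AU2 ctrmx0.
- have eET : E^T *m D^T = 1%:M.
    by rewrite -hUU {2}hU' hA' -!mulmxA [ctrmx U1 *m _]mulmxA hUU mul1mx.
  have eA1 : ctrmx U1 *m A *m U1 *m ctrmx U1 = E^T.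
    have UA : ctrmx U1 *m A = E^T by rewrite hA' mulmxA hUU mul1mx.
    have AU : A *m U1 = ctrmx E^T by rewrite hA2 -mulmxA hUU mulmx1.
    by rewrite -(mulmxA (ctrmx U1)) AU -mulmxA -hA2 UA.
  have := eET; rewrite -eA1 -(mulmxA (ctrmx U1 *m A *m U1)).
  by case/mulmx1_unit => h _; exact: h.
- by rewrite !ctrmx_mul ctrmxK hH mulmxA.
- move=> y; rewrite -!mulmxA dot_mulr ctrmxK.
  by have := hpos (U1 *m y); rewrite -mulmxA dotE.
Qed.

Lemma ctrmx_row p r m (U1 : 'M[C]_(p, r)) (U2 : 'M[C]_(p, m)) :
  ctrmx (row_mx U1 U2) = col_mx (ctrmx U1) (ctrmx U2).
Proof. by rewrite /ctrmx map_row_mx tr_row_mx. Qed.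

Lemma ctrmx_block m1 m2 n1 n2 (a : 'M[C]_(m1, n1)) (b : 'M[C]_(m1, n2))
    (c : 'M[C]_(m2, n1)) (d : 'M[C]_(m2, n2)) :
  ctrmx (block_mx a b c d) = block_mx (ctrmx a) (ctrmx c) (ctrmx b) (ctrmx d).
Proof. by rewrite /ctrmx map_block_mx tr_block_mx. Qed.

Lemma unitary_blocks p r m (U1 : 'M[C]_(p, r)) (U2 : 'M[C]_(p, m)) :
  ctrmx (row_mx U1 U2) *m row_mx U1 U2 = 1%:M ->
  row_mx U1 U2 *m ctrmx (row_mx U1 U2) = 1%:M ->
  [/\ ctrmx U1 *m U1 = 1%:M, ctrmx U1 *m U2 = 0, ctrmx U2 *m U1 = 0,
      ctrmx U2 *m U2 = 1%:M & U1 *m ctrmx U1 + U2 *m ctrmx U2 = 1%:M].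
Proof.
rewrite ctrmx_row mul_col_row mul_row_col scalar_mx_block => /eq_block_mx [h1 h2 h3 h4] h5.
by split.
Qed.

Lemma ctrmx_unit n (M : 'M[C]_n) : M \in unitmx -> ctrmx M \in unitmx.
Proof. by move=> hM; rewrite /ctrmx unitmx_tr map_unitmx. Qed.

Lemma zm1 (V : zmodType) (x y z u : V) : x + y + u - (z + u) = x + (y - z).
Proof. by rewrite opprD addrACA subrr addr0 addrA. Qed.

Lemma zm2 (V : zmodType) (x y z w : V) : x + y - z - (w + y) = x - w - z.
Proof.
by rewrite opprD !addrA (addrAC x y) (addrAC (x - z) y) addrK addrAC.
Qed.

Lemma le_maxl (a b : R) : a <= Num.max a b.
Proof. by rewrite le_max lexx. Qed.
Lemma le_maxr (a b : R) : b <= Num.max a b.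
Proof. by rewrite le_max lexx orbT. Qed.
End S.
Lemma real_core (R : realType) (a b c d b' d' f g t y : R) :
  0 <= a -> 0 <= b -> 0 <= c -> 0 <= d -> 0 <= b' -> 0 <= d' -> 0 <= f -> 0 <= g ->
  0 <= t -> 0 <= y ->
  f <= a + y * b -> g <= c + y * d -> b <= b' + y * a -> d <= d' + y * c ->
  a ^+ 2 + c ^+ 2 <= t * (a * f + c * g) -> b' <= t * d -> d' <= t * b ->
  t * (1 + y) ^+ 2 < 1 ->
  a = 0 /\ b = 0 /\ c = 0 /\ d = 0.
Proof.
move=> ha hb hc hd hb' hd' hf hg ht hy hf1 hg1 hb1 hd1 h3 hb2 hd2 hlt.
set p2 := a ^+ 2 + c ^+ 2.
set f2 := f ^+ 2 + g ^+ 2.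
set d2 := b ^+ 2 + d ^+ 2.
set q2 := b' ^+ 2 + d' ^+ 2.
have s1 : (a * f + c * g) ^+ 2 <= p2 * f2.
  by have := sqr_ge0 (a * g - c * f); rewrite /p2 /f2; nra.
have hp2 : 0 <= p2 by rewrite /p2; nra.
have hf2 : 0 <= f2 by rewrite /f2; nra.
have haf : 0 <= a * f + c * g by nra.
have s2 : p2 <= t ^+ 2 * f2.
  have [p0|pp] := eqVneq p2 0.
    by rewrite p0; nra.
  have pp' : 0 < p2 by rewrite lt_neqAle eq_sym pp hp2.
  have e : p2 ^+ 2 <= t ^+ 2 * (a * f + c * g) ^+ 2.
    by rewrite /p2; nra.
  have e2 : p2 * p2 <= (t ^+ 2 * f2) * p2 by nra.
  by rewrite ler_pM2r in e2.
have s3 : q2 <= t ^+ 2 * d2 by rewrite /q2 /d2; nra.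
have s4 : f2 + d2 <= (1 + y) ^+ 2 * (p2 + d2).
  have e1 : f ^+ 2 <= (a + y * b) ^+ 2 by nra.
  have e2 : g ^+ 2 <= (c + y * d) ^+ 2 by nra.
  have e3 : y * (2 * (a * b + c * d)) <= y * (a ^+ 2 + b ^+ 2 + c ^+ 2 + d ^+ 2).
    apply: ler_wpM2l => //; have := sqr_ge0 (a - b); have := sqr_ge0 (c - d); nra.
  have e4 : 0 <= y ^+ 2 * (a ^+ 2 + c ^+ 2) by nra.
  have e5 : 0 <= y * (a ^+ 2 + b ^+ 2 + c ^+ 2 + d ^+ 2) by nra.
  rewrite /f2 /p2 /d2; nra.
have s5 : p2 + d2 <= (1 + y) ^+ 2 * (p2 + q2).
  have e1 : b ^+ 2 <= (b' + y * a) ^+ 2 by nra.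
  have e2 : d ^+ 2 <= (d' + y * c) ^+ 2 by nra.
  have e3 : y * (2 * (a * b' + c * d')) <= y * (a ^+ 2 + b' ^+ 2 + c ^+ 2 + d' ^+ 2).
    apply: ler_wpM2l => //; have := sqr_ge0 (a - b'); have := sqr_ge0 (c - d'); nra.
  have e4 : 0 <= y ^+ 2 * (b' ^+ 2 + d' ^+ 2) by nra.
  have e5 : 0 <= y * (a ^+ 2 + b' ^+ 2 + c ^+ 2 + d' ^+ 2) by nra.
  rewrite /q2 /p2 /d2; nra.
have hw : 0 <= p2 + q2 by rewrite /q2; nra.
have hk : 0 <= t * (1 + y) ^+ 2 by nra.
have s6 : p2 + q2 <= (t * (1 + y) ^+ 2) ^+ 2 * (p2 + q2).
  have e : p2 + q2 <= t ^+ 2 * (f2 + d2) by nra.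
  have e' : t ^+ 2 * (f2 + d2) <= t ^+ 2 * ((1 + y) ^+ 2 * (p2 + d2)) by nra.
  have e'' : t ^+ 2 * ((1 + y) ^+ 2 * (p2 + d2)) <= t ^+ 2 * ((1 + y) ^+ 2 * ((1 + y) ^+ 2 * (p2 + q2))).
    have : 0 <= t ^+ 2 * (1 + y) ^+ 2 by nra.
    nra.
  have -> : (t * (1 + y) ^+ 2) ^+ 2 * (p2 + q2) = t ^+ 2 * ((1 + y) ^+ 2 * ((1 + y) ^+ 2 * (p2 + q2))) by ring.
  by apply: (le_trans e); apply: (le_trans e').
have hk2 : (t * (1 + y) ^+ 2) ^+ 2 < 1 by nra.
have w0 : p2 + q2 = 0 by nra.
have a0 : a = 0 by rewrite /p2 /q2 in w0; nra.
have c0 : c = 0 by rewrite /p2 /q2 in w0; nra.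
have b'0 : b' = 0 by rewrite /p2 /q2 in w0; nra.
have d'0 : d' = 0 by rewrite /p2 /q2 in w0; nra.
split => //; split; first by nra.
by split => //; nra.
Qed.

Local Notation normc := (ComplexField.Normc.normc).

Theorem theorem3p4 (R : realType) (p q r s m : nat)
    (A : 'M[R[i]]_p) (C : 'M[R[i]]_q) (B : 'M[R[i]]_(p, q))
    (U1 : 'M[R[i]]_(p, r)) (U2 : 'M[R[i]]_(p, m))
    (V1 : 'M[R[i]]_(q, s)) (V2 : 'M[R[i]]_(q, m)) :
  hpsd A -> hpsd C ->
  ctrmx (row_mx U1 U2) *m row_mx U1 U2 = 1%:M ->
  row_mx U1 U2 *m ctrmx (row_mx U1 U2) = 1%:M ->
  ctrmx (row_mx V1 V2) *m row_mx V1 V2 = 1%:M ->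
  row_mx V1 V2 *m ctrmx (row_mx V1 V2) = 1%:M ->
  (U1^T == A^T)%MS ->
  (V1^T == C^T)%MS ->
  let A1 := ctrmx U1 *m A *m U1 in
  let C1 := ctrmx V1 *m C *m V1 in
  let B12 := ctrmx U1 *m B *m V2 in
  let B21 := ctrmx U2 *m B *m V1 in
  let B22 := ctrmx U2 *m B *m V2 in
  B22 \in unitmx ->
  let H := block_mx A B (ctrmx B) (- C) in
  let eps : R :=
    1 / ((1 + Num.max (specnorm (B12 *m invmx B22))
                      (specnorm (ctrmx B21 *m ctrmx (invmx B22)))) ^+ 2
         * Num.max (specnorm (invmx A1))
                   (Num.max (specnorm (invmx C1)) (specnorm (invmx B22)))) in
  forall x : R, - eps < x < eps -> ~~ eigenvalue H (x%:C)%C.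
Proof.
move=> hA hC hU hU' hV hV' hRA hRC A1 C1 B12 B21 B22 hB22 H eps x hx.
have [u11 u12 u21 u22 uu] := unitary_blocks hU hU'.
have [v11 v12 v21 v22 vv] := unitary_blocks hV hV'.
have [AU2 U2A uA1 hA1 pA1] := range_facts hA u11 u12 hRA.
have [CV2 V2C uC1 hC1 pC1] := range_facts hC v11 v12 hRC.
have hH : ctrmx H = H.
  by rewrite /H ctrmx_block hA.1 ctrmxK ctrmxN hC.1.
apply/negP => /eigenvalueP [v hv vn0].
set l := (x%:C)%C in hv.
set w := ctrmx v.
have hw : H *m w = l *: w.
  by rewrite /w -hH -ctrmx_mul hv ctrmxZ conj_real.
have wn0 : w != 0.
  by apply: contra vn0 => /eqP w0; rewrite -[v]ctrmxK -/w w0 ctrmx0.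
set v1 := usubmx w; set v2 := dsubmx w.
have ew : w = col_mx v1 v2 by rewrite vsubmxK.
move: hw; rewrite ew /H mul_block_col scale_col_mx => /eq_col_mx [e1 e2].
set a := ctrmx U1 *m v1; set b := ctrmx U2 *m v1.
set c := ctrmx V1 *m v2; set d := ctrmx V2 *m v2.
have hv1 : v1 = U1 *m a + U2 *m b by rewrite /a /b !mulmxA -mulmxDl uu mul1mx.
have hv2 : v2 = V1 *m c + V2 *m d by rewrite /c /d !mulmxA -mulmxDl vv mul1mx.
have ha : ctrmx U1 *m v1 = a by [].
have hb : ctrmx U2 *m v1 = b by [].
have hc : ctrmx V1 *m v2 = c by [].
have hd : ctrmx V2 *m v2 = d by [].
clearbody a b c d.
set B11 := ctrmx U1 *m B *m V1.
have E1 : A1 *m a + B11 *m c + B12 *m d = l *: a.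
  have := congr1 (mulmx (ctrmx U1)) e1.
  rewrite mulmxDr -scalemxAr ha {1}hv1 hv2 !mulmxDr !mulmxA -[ctrmx U1 *m A *m U2]mulmxA AU2 mulmx0 mul0mx addr0.
  by rewrite -addrA.
have E2 : B21 *m c + B22 *m d = l *: b.
  have := congr1 (mulmx (ctrmx U2)) e1.
  by rewrite mulmxDr -scalemxAr hb hv2 !mulmxDr !mulmxA U2A mul0mx add0r.
have E3 : ctrmx B11 *m a + ctrmx B21 *m b - C1 *m c = l *: c.
  have := congr1 (mulmx (ctrmx V1)) e2.
  rewrite mulmxDr -scalemxAr hc hv1 hv2 mulNmx mulmxN !mulmxDr !mulmxA -[ctrmx V1 *m C *m V2]mulmxA CV2 mulmx0 mul0mx addr0.
  by rewrite /B11 /B21 !ctrmx_mul !ctrmxK !mulmxA.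
have E4 : ctrmx B12 *m a + ctrmx B22 *m b = l *: d.
  have := congr1 (mulmx (ctrmx V2)) e2.
  rewrite mulmxDr -scalemxAr hd hv1 mulNmx mulmxN !mulmxDr !mulmxA V2C mul0mx oppr0 addr0.
  by rewrite /B12 /B22 !ctrmx_mul !ctrmxK !mulmxA.
set Xm := B12 *m invmx B22.
set Ym := ctrmx B21 *m ctrmx (invmx B22).
have uB22c : ctrmx B22 \in unitmx by apply: ctrmx_unit.
have cXm : ctrmx Xm = invmx (ctrmx B22) *m ctrmx B12 by rewrite /Xm ctrmx_mul ctrmx_inv.
have cYm : ctrmx Ym = invmx B22 *m B21 by rewrite /Ym ctrmx_mul !ctrmxK.
have XB : Xm *m B22 = B12 by rewrite /Xm (mulmxKV hB22).
have YB : Ym *m ctrmx B22 = ctrmx B21.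
  by rewrite /Ym -mulmxA -ctrmx_mul (mulmxV hB22) ctrmx1 mulmx1.
set b' := b + ctrmx Xm *m a.
set d' := d + ctrmx Ym *m c.
set f := a - Xm *m b.
set g := c - Ym *m d.
set T := B11 - Xm *m B21.
have K2a : ctrmx B22 *m b' = l *: d.
  by rewrite /b' mulmxDr cXm -mulmxA (mulKVmx uB22c) addrC.
have K2b : B22 *m d' = l *: b.
  by rewrite /d' mulmxDr cYm -(mulmxA (invmx B22)) (mulKVmx hB22) addrC.
have K1a : A1 *m a + T *m c = l *: f.
  rewrite /f scalerBr scalemxAr -E2 -E1 mulmxDr (mulmxA Xm B22) XB (mulmxA Xm B21) /T mulmxBl.
  by rewrite zm1.
have K1b : ctrmx T *m a - C1 *m c = l *: g.
  rewrite /g scalerBr scalemxAr -E4 -E3 mulmxDr (mulmxA Ym (ctrmx B22)) YB.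
  rewrite (mulmxA Ym (ctrmx B12)) /T ctrmxD ctrmxN (ctrmx_mul Xm B21) cXm -ctrmx_inv.
  rewrite (mulmxA (ctrmx B21)) mulmxBl.
  by rewrite zm2.
set γ := Num.max (specnorm Xm) (specnorm Ym).
set α := Num.max (specnorm (invmx A1))
                 (Num.max (specnorm (invmx C1)) (specnorm (invmx B22))).
have hγ : 0 <= γ := le_trans (specnorm_ge0 Xm) (le_maxl _ _).
have hα : 0 <= α := le_trans (specnorm_ge0 _) (le_maxl _ _).
have hαA : specnorm (invmx A1) <= α := le_maxl _ _.
have hαC : specnorm (invmx C1) <= α := le_trans (le_maxl _ _) (le_maxr _ _).
have hαB : specnorm (invmx B22) <= α := le_trans (le_maxr _ _) (le_maxr _ _).
have hγX : specnorm Xm <= γ := le_maxl _ _.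
have hγY : specnorm Ym <= γ := le_maxr _ _.
set t := α * `|x|.
have ht0 : 0 <= t by rewrite /t mulr_ge0.
have hl : normc l = `|x| by rewrite normc_real.
have hf : vnorm f <= vnorm a + γ * vnorm b.
  apply: (le_trans (vnormB _ _)); rewrite lerD2l.
  exact: (le_trans (specnormP _ _) (ler_wpM2r (vnorm_ge0 _) hγX)).
have hg : vnorm g <= vnorm c + γ * vnorm d.
  apply: (le_trans (vnormB _ _)); rewrite lerD2l.
  exact: (le_trans (specnormP _ _) (ler_wpM2r (vnorm_ge0 _) hγY)).
have hb1 : vnorm b <= vnorm b' + γ * vnorm a.
  have -> : b = b' - ctrmx Xm *m a by rewrite /b' addrK.
  apply: (le_trans (vnormB _ _)); rewrite lerD2l.
  exact: (le_trans (specnormP_adj _ _) (ler_wpM2r (vnorm_ge0 _) hγX)).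
have hd1 : vnorm d <= vnorm d' + γ * vnorm c.
  have -> : d = d' - ctrmx Ym *m c by rewrite /d' addrK.
  apply: (le_trans (vnormB _ _)); rewrite lerD2l.
  exact: (le_trans (specnormP_adj _ _) (ler_wpM2r (vnorm_ge0 _) hγY)).
have hb2 : vnorm b' <= t * vnorm d.
  have -> : b' = ctrmx (invmx B22) *m (l *: d) by rewrite -K2a ctrmx_inv (mulKmx uB22c).
  apply: (le_trans (specnormP_adj _ _)); rewrite vnormZ hl /t mulrA.
  by apply: ler_wpM2r; [exact: vnorm_ge0 | apply: ler_wpM2r].
have hd2 : vnorm d' <= t * vnorm b.
  have -> : d' = invmx B22 *m (l *: b) by rewrite -K2b (mulKmx hB22).
  apply: (le_trans (specnormP _ _)); rewrite vnormZ hl /t mulrA.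
  by apply: ler_wpM2r; [exact: vnorm_ge0 | apply: ler_wpM2r].
have h3 : vnorm a ^+ 2 + vnorm c ^+ 2 <= t * (vnorm a * vnorm f + vnorm c * vnorm g).
  have cA := coerc hA1 pA1 uA1 a.
  have cC := coerc hC1 pC1 uC1 c.
  have k1 := k1_ineq pA1 pC1 K1a K1b.
  have nP := normc_ge0 (dot a (A1 *m a)).
  have nQ := normc_ge0 (dot c (C1 *m c)).
  apply: (le_trans (lerD cA cC)).
  apply: (le_trans (lerD (ler_wpM2r nP hαA) (ler_wpM2r nQ hαC))).
  rewrite -mulrDr /t -mulrA; exact: ler_wpM2l.
have ht : t * (1 + γ) ^+ 2 < 1.
  move: hx; rewrite -ltr_norml /eps.
  change (`|x| < 1 / ((1 + γ) ^+ 2 * α) -> t * (1 + γ) ^+ 2 < 1).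
  set K := (1 + γ) ^+ 2 * α.
  have hK : 0 <= K by rewrite /K mulr_ge0 // sqr_ge0.
  have [K0|Kn0] := eqVneq K 0.
    by rewrite K0 invr0 mulr0 => /lt_le_trans /(_ (normr_ge0 x)); rewrite ltxx.
  have Kp : 0 < K by rewrite lt_neqAle eq_sym Kn0 hK.
  rewrite ltr_pdivlMr // => hxK.
  have -> : t * (1 + γ) ^+ 2 = `|x| * K by rewrite /t /K; ring.
  exact: hxK.
have [a0 [b0 [c0 d0]]] := real_core (vnorm_ge0 a) (vnorm_ge0 b) (vnorm_ge0 c)
  (vnorm_ge0 d) (vnorm_ge0 b') (vnorm_ge0 d') (vnorm_ge0 f) (vnorm_ge0 g)
  ht0 hγ hf hg hb1 hd1 h3 hb2 hd2 ht.
move: wn0; rewrite ew hv1 hv2 (vnorm_eq0 a0) (vnorm_eq0 b0) (vnorm_eq0 c0) (vnorm_eq0 d0).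
by rewrite !mulmx0 !addr0 col_mx0 eqxx.
Qed.
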